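(* The metric space $(\mathtt{CA},\delta)$ is not complete: there is a Cauchy sequence in $(\mathtt{CA},\delta)$ that does not converge to any element of $\mathtt{CA}$.
   Context: $\Sigma$ is a finite alphabet with $|\Sigma|\ge2$, $N(r)=[-r,r]$. A cellular automaton (CA) is a map $c:\Sigma^\mathbb{Z}\to\Sigma^\mathbb{Z}$ of the form $c(x)_i=F(x_{[i-r,i+r]})$ for a local function $F:\Sigma^{N(r)}\to\Sigma$. $\mathtt{CA}$ is the set of all CA. For $c,d\in\mathtt{CA}$ with common radius $r$, $D^c_d$ is the set of $w\in\Sigma^{N(r)}$ on which the local rules of $c$ and $d$ give different outputs, and $\delta(c,d)=|D^c_d|/|\Sigma|^{2r+1}$ (independent of $r$). *)

(* Defs.v *)
From HB Require Import structures.
From mathcomp Require Import all_boot all_order all_algebra.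
Set Implicit Arguments. Unset Strict Implicit. Unset Printing Implicit Defensive.
Import Order.TTheory GRing.Theory Num.Theory.

(* A window of radius r: a word indexed by 'I_(2r+1); index i stands for
   position i - r in N(r) = [-r, r]. *)
Definition window (S : finType) (r : nat) := {ffun 'I_(r.*2.+1) -> S}.

(* A cellular automaton, given by a radius r and a local function
   F : S^{N(r)} -> S; the global map is c(x)_i = F(x_[i-r,i+r]). *)
Record CA (S : finType) := mkCA {
  rad : nat;
  rule : {ffun window S rad -> S}
}.

(* Restriction of a radius-R window to its central radius-r subwindow
   (meaningful for r <= R). *)
Definition restr (S : finType) (r R : nat) (w : window S R) : window S r :=
  [ffun i : 'I_(r.*2.+1) => w (inord (i + (R - r)))].

Definition localAt (S : finType) (c : CA S) (R : nat) (w : window S R) : S :=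
  rule c (restr (rad c) w).

Definition Dset (S : finType) (c d : CA S) :
  {set window S (maxn (rad c) (rad d))} :=
  [set w | localAt c w != localAt d w].

Definition delta (S : finType) (c d : CA S) : rat :=
  ((#|Dset c d|)%:R / (#|S| ^ (maxn (rad c) (rad d)).*2.+1)%:R)%R.

(* Main.v *)
Require Import Defs.
From HB Require Import structures.
From mathcomp Require Import all_boot all_order all_algebra zify.
Require Import Defs.
Import Order.TTheory GRing.Theory Num.Theory.
Set Implicit Arguments. Unset Strict Implicit.


Lemma card_fam (S : finType) N (F : 'I_N -> pred S) :
  #|[pred w : {ffun 'I_N -> S} | w \in family F]| = \prod_(i < N) #|F i|.
Proof.
rewrite (@eq_card _ _ (family F)) //.
rewrite card_family foldrE big_map /=.
by rewrite enumT.
Qed.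
Lemma prod_split (N L k c q : nat) : L + k < N ->
  \prod_(i < N) (if (L < i) && (i <= L + k) then c else q) = c ^ k * q ^ (N - k).
Proof.
move=> h.
rewrite -(big_mkord xpredT (fun i => if (L < i) && (i <= L + k) then c else q)).
rewrite (big_cat_nat (n:=L.+1)) //=; last lia.
rewrite (big_cat_nat (m:=L.+1) (n:=(L+k).+1)) //=; try lia.
rewrite (@eq_big_nat _ _ _ 0 L.+1 _ (fun _ => q)); last first.
  by move=> i /andP[? ?]; have -> : (L < i) && (i <= L + k) = false by lia.
rewrite (@eq_big_nat _ _ _ L.+1 (L+k).+1 _ (fun _ => c)); last first.
  by move=> i /andP[? ?]; have -> : (L < i) && (i <= L + k) by lia.
rewrite (@eq_big_nat _ _ _ (L+k).+1 N _ (fun _ => q)); last first.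
  by move=> i /andP[? ?]; have -> : (L < i) && (i <= L + k) = false by lia.
rewrite !prod_nat_const_nat.
have -> : N - k = (L.+1 - 0) + (N - (L + k).+1) by lia.
rewrite expnD; have -> : (L + k).+1 - L.+1 = k by lia.
by rewrite mulnCA mulnA.
Qed.

Definition sw2 (T : eqType) (a b y : T) := if y == a then b else if y == b then a else y.
Lemma sw2K (T : eqType) (a b y : T) : a != b -> sw2 a b (sw2 a b y) = y.
Proof.
move=> hab; rewrite /sw2.
have ba : (b == a) = false by rewrite eq_sym; apply/negbTE.
case: (eqVneq y a) => [->|ya]; first by rewrite eqxx /= ba.
case: (eqVneq y b) => [->|yb]; first by rewrite eqxx.
by rewrite (negbTE ya) (negbTE yb).
Qed.

Section S.
Variable S : finType.

Definition Fseq (a : S) (s : seq S) := nth a s (index a s).+1.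
Definition uCA (a : S) (n : nat) : CA S :=
  @mkCA S n [ffun w : window S n => Fseq a [seq w (inord (n + j)) | j <- iota 1 n]].

Lemma localAt_u a n R (w : window S R) : n <= R ->
  localAt (uCA a n) w = Fseq a [seq w (inord (R + j)) | j <- iota 1 n].
Proof.
move=> hnR; rewrite /localAt /= ffunE; congr Fseq.
apply/eq_in_map => j; rewrite mem_iota => /andP[j1 jn].
rewrite ffunE; congr (w _); apply: val_inj => /=.
have h1 : n + j < n.*2.+1 by rewrite -addnn; lia.
rewrite (inordK h1).
have h2 : n + j + (R - n) < R.*2.+1 by rewrite -addnn; lia.
have h3 : R + j < R.*2.+1 by rewrite -addnn; lia.
rewrite (inordK h2) (inordK h3); lia.
Qed.

Lemma Fseq_prefix a s t : (index a s).+1 < size s -> Fseq a (s ++ t) = Fseq a s.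
Proof.
move=> h; rewrite /Fseq index_cat.
have -> : a \in s by rewrite -index_mem; lia.
by rewrite nth_cat h.
Qed.

Lemma Fseq_stab a (x : nat -> S) N m : N <= m ->
  (exists j, 1 <= j < N /\ x j = a) ->
  Fseq a (map x (iota 1 m)) = Fseq a (map x (iota 1 N)).
Proof.
move=> hNm [j [/andP[j1 jN] xj]].
rewrite -(subnKC hNm) iotaD map_cat Fseq_prefix // size_map size_iota.
have : index (nth a (map x (iota 1 N)) j.-1) (map x (iota 1 N)) <= j.-1.
  apply: index_nth; rewrite size_map size_iota; lia.
rewrite (nth_map 0); last by rewrite size_iota; lia.
rewrite nth_iota; last lia.
have -> : 1 + j.-1 = j by lia.
rewrite xj; lia.
Qed.

Lemma Fseq_pat a (x : nat -> S) r n :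
  (forall j, 1 <= j <= r -> x j != a) -> x r.+1 = a -> r.+2 <= n ->
  Fseq a (map x (iota 1 n)) = x r.+2.
Proof.
move=> hne hr hn.
have -> : n = r + (n - r - 2).+2 by lia.
rewrite iotaD map_cat /= /Fseq index_cat.
have -> : (a \in [seq x i | i <- iota 1 r]) = false.
  apply/negP => /mapP [j]; rewrite mem_iota => hj hxj.
  by move: (hne j ltac:(lia)); rewrite hxj => /eqP.
rewrite size_map size_iota.
have -> : 1 + r = r.+1 by lia.
rewrite hr /= eqxx addn0 nth_cat size_map size_iota.
have -> : (r.+1 < r) = false by lia.
by have -> : r.+1 - r = 1 by lia.
Qed.


Lemma cauchy_card a m n N : 0 < N -> N <= m -> N <= n ->
  #|Dset (uCA a m) (uCA a n)| <=
    (#|S|.-1) ^ N.-1 * #|S| ^ ((maxn m n).*2.+1 - N.-1).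
Proof.
move=> N0 Nm Nn.
rewrite /Dset /=.
set R := maxn m n.
pose F := fun i : 'I_(R.*2.+1) =>
  if (R < i) && (i <= R + N.-1) then (predC1 a : pred S) else (predT : pred S).
have sub : [set w : window S R | localAt (uCA a m) w != localAt (uCA a n) w]
   \subset [pred w : {ffun 'I_(R.*2.+1) -> S} | w \in family F].
  apply/subsetP => w; rewrite inE => hw; rewrite inE.
  apply/familyP => i; rewrite /F.
  case: ifP => // /andP[i1 i2]; rewrite inE.
  apply/negP => /eqP wia; move/negP: hw; apply.
  rewrite !localAt_u; try (rewrite /R; lia).
  pose x := fun k => w (inord (R + k)).
  have xj : x (i - R) = a.
    rewrite /x -wia; congr (w _); apply: val_inj => /=; rewrite inordK; first lia.
    have := ltn_ord i; lia.
  rewrite -/(map x _) -/(map x _).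
  rewrite (Fseq_stab Nm) ?(Fseq_stab Nn) //; exists (i - R); split => //; lia.
apply: (leq_trans (subset_leq_card sub)).
rewrite card_fam.
rewrite (eq_bigr (fun i : 'I_(R.*2.+1) => if (R < i) && (i <= R + N.-1) then #|S|.-1 else #|S|)); last first.
  move=> i _; rewrite /F; case: ifP => _; first by rewrite cardC1.
  by rewrite cardT /= -cardE.
rewrite prod_split //.
have : N <= R by rewrite /R; lia.
rewrite -addnn; lia.
Qed.


Lemma lower_card (a b : S) (hab : a != b) (c : CA S) (n : nat) : (rad c).+2 <= n ->
  #|S| ^ ((maxn n (rad c)).*2.+1 - (rad c).+2) <= 2 * #|Dset (uCA a n) c|.
Proof.
move=> hn; rewrite /Dset /=.
set r := rad c; set R := maxn n r.
have hR : r.+2 <= R by rewrite /R; lia.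
have hnR : n <= R by rewrite /R; lia.
pose G := fun i : 'I_(R.*2.+1) =>
  if (R < i) && (i <= R + r) then (pred1 b : pred S)
  else if (R + r < i) && (i <= R + r.+2) then (pred1 a : pred S) else (predT : pred S).
pose p : 'I_(R.*2.+1) := inord (R + r.+2).
have hp : nat_of_ord p = R + r.+2 by rewrite /p inordK // -addnn; lia.
pose sw := sw2 a b.
have swK : involutive sw by move=> y; exact: sw2K.
pose sig := fun w : window S R => [ffun i => if i == p then sw (w i) else w i] : window S R.
have sigK : involutive sig.
  move=> w; apply/ffunP => i; rewrite !ffunE; case: (i == p) => //; exact: swK.
set D := [set w : window S R | localAt (uCA a n) w != localAt c w].
set A0 := [pred w : {ffun 'I_(R.*2.+1) -> S} | w \in family G].
have idx : forall k, k <= R -> nat_of_ord (inord (R + k) : 'I_(R.*2.+1)) = R + k.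
  by move=> k hk; rewrite inordK // -addnn; lia.
have sub : A0 \subset D :|: sig @^-1: D.
  apply/subsetP => w; rewrite inE => /familyP hG.
  pose x := fun k => w (inord (R + k)).
  have xb : forall j, 1 <= j <= r -> x j = b.
    move=> j hj; move: (hG (inord (R + j))); rewrite /G idx; last lia.
    have -> : (R < R + j) && (R + j <= R + r) by lia.
    by rewrite inE => /eqP.
  have xval : forall k, r < k <= r.+2 -> x k = a.
    move=> k hk; move: (hG (inord (R + k))); rewrite /G idx; last lia.
    have -> : (R < R + k) && (R + k <= R + r) = false by lia.
    have -> : (R + r < R + k) && (R + k <= R + r.+2) by lia.
    by rewrite inE => /eqP.
  have L1 : localAt (uCA a n) w = a.
    rewrite localAt_u // -/(map x _) (Fseq_pat (x := x) (r := r)) //.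
    - by apply: xval; lia.
    - by move=> j hj; rewrite xb //; rewrite eq_sym.
    - by apply: xval; lia.
  pose x' := fun k => sig w (inord (R + k)).
  have x'x : forall k, k <= r.+1 -> x' k = x k.
    move=> k hk; rewrite /x' /sig ffunE; case: eqP => // /(congr1 (@nat_of_ord _)).
    rewrite hp idx; lia.
  have L2 : localAt (uCA a n) (sig w) = b.
    rewrite localAt_u // -/(map x' _) (Fseq_pat (x := x') (r := r)) //.
    - rewrite /x' /sig ffunE.
      have -> : (inord (R + r.+2) : 'I_(R.*2.+1)) == p by [].
      by rewrite -/(x r.+2) xval /sw /sw2 ?eqxx //; lia.
    - by move=> j hj; rewrite x'x ?xb //; [rewrite eq_sym | lia].
    - by rewrite x'x // xval //; lia.
  have L3 : localAt c (sig w) = localAt c w.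
    rewrite /localAt; congr (rule c _); apply/ffunP => i; rewrite !ffunE.
    have hi : nat_of_ord i <= r + r by have := ltn_ord i; rewrite /r; lia.
    case: eqP => // /(congr1 (@nat_of_ord _)); rewrite hp inordK; first lia.
    lia.
  rewrite in_setU !inE L1 L2 L3.
  case: (eqVneq a (localAt c w)) => [<-|] //=.
  by rewrite eq_sym.
apply: (leq_trans _ (_ : #|D :|: sig @^-1: D| <= _)).
  have := subset_leq_card sub.
  apply: leq_trans.
  rewrite card_fam.
  rewrite (eq_bigr (fun i : 'I_(R.*2.+1) => if (R < i) && (i <= R + r.+2) then 1 else #|S|)); last first.
    move=> i _; rewrite /G; case: ifP => h1; first by rewrite card1; have -> : (R < i) && (i <= R + r.+2) by lia.
    case: ifP => h2; first by rewrite card1; have -> : (R < i) && (i <= R + r.+2) by lia.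
    have -> : (R < i) && (i <= R + r.+2) = false by lia.
    by rewrite cardT /= -cardE.
  by rewrite prod_split ?exp1n ?mul1n //; rewrite -addnn; lia.
rewrite cardsU card_preimset; last exact: (can_inj sigK).
by rewrite mul2n -(addnn #|D|) leq_subr.
Qed.

End S.

Lemma kt t k : k * t ^ k <= t * t.+1 ^ k.
Proof.
elim: k => [|k IH]; first by rewrite mul0n.
have h : t ^ k <= t.+1 ^ k.
  by elim: k {IH} => // k IH2; rewrite !expnS leq_mul.
rewrite !expnS; nia.
Qed.

Lemma rat_up (t k d M : nat) : k <= M ->
  d <= t ^ k * t.+1 ^ (M - k) ->
  ((d%:R / (t.+1 ^ M)%:R : rat) <= (t ^ k)%:R / (t.+1 ^ k)%:R)%R.
Proof.
move=> hk hd.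
rewrite ler_pdivrMr ?ltr0n ?expn_gt0 //.
have -> : ((t.+1 ^ M)%:R = (t.+1 ^ k)%:R * (t.+1 ^ (M - k))%:R :> rat)%R.
  by rewrite -natrM -expnD subnKC.
rewrite mulrA divfK ?pnatr_eq0 ?expn_eq0 // -natrM ler_nat.
exact: hd.
Qed.

Lemma rat_small (t k : nat) (eps : rat) : (0 < eps)%R -> 0 < k ->
  ((t%:R / eps) < k%:R)%R -> (((t ^ k)%:R / (t.+1 ^ k)%:R : rat) < eps)%R.
Proof.
move=> he hk hb.
apply: (le_lt_trans (y := (t%:R / k%:R)%R)).
  rewrite ler_pdivrMr ?ltr0n ?expn_gt0 // mulrAC ler_pdivlMr ?ltr0n //.
  by rewrite -!natrM ler_nat mulnC kt.
rewrite ltr_pdivrMr ?ltr0n // mulrC -ltr_pdivrMr //.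
Qed.

Lemma rat_low (d Q E : nat) : 0 < Q -> 0 < E -> Q <= E * d ->
  ~ ((d%:R / Q%:R : rat) < 1 / E%:R)%R.
Proof.
move=> hQ hE h; apply/negP; rewrite -leNgt.
rewrite ler_pdivrMr ?ltr0n // mulrAC ler_pdivlMr ?ltr0n // mul1r.
by rewrite -natrM ler_nat mulnC.
Qed.

Theorem mainTheorem10 (S : finType) (hS : 1 < #|S|) :
  exists u : nat -> CA S,
    (forall eps : rat, (0 < eps)%R ->
       exists N : nat, forall m n : nat, N <= m -> N <= n ->
         (delta (u m) (u n) < eps)%R) /\
    ~ (exists c : CA S, forall eps : rat, (0 < eps)%R ->
         exists N : nat, forall n : nat, N <= n -> (delta (u n) c < eps)%R).
Proof.
have [a [b [_ _ hab]]] := card_gt1P hS.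
have hq : #|S| = (#|S|.-1).+1 by lia.
exists (uCA a); split.
  move=> eps he.
  set t := #|S|.-1.
  set K := Num.bound (t%:R / eps : rat).
  exists K.+2 => m n hm hn.
  rewrite /delta /=.
  have hc := @cauchy_card S a m n K.+2 erefl hm hn.
  apply: le_lt_trans (rat_small (t := t) (k := K.+1) he _ _); last 2 first.
  - by [].
  - apply: (lt_le_trans (archi_boundP _)); first by rewrite divr_ge0 // ltW.
    by rewrite ler_nat.
  rewrite hq; apply: rat_up; first by rewrite -addnn; lia.
  by rewrite -hq.
move=> [c hc].
set r := rad c.
have [N hN] := hc (1 / (2 * #|S| ^ r.+2)%:R)%R ltac:(by rewrite divr_gt0 // ltr0n muln_gt0 expn_gt0; lia).
have := hN (maxn N r.+2) (leq_maxl _ _).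
rewrite /delta /=.
apply: rat_low.
- by rewrite expn_gt0 (ltnW hS).
- by rewrite muln_gt0 expn_gt0 (ltnW hS).
have hl := @lower_card S a b hab c (maxn N r.+2) (leq_maxr _ _).
set M := (maxn (maxn N r.+2) r).*2.+1.
have hM : r.+2 <= M by rewrite /M; lia.
have -> : #|S| ^ M = #|S| ^ r.+2 * #|S| ^ (M - r.+2) by rewrite -expnD subnKC.
rewrite [2 * _]mulnC -mulnA leq_pmul2l ?expn_gt0 ?(ltnW hS) //.
Qed.
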